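(* Let $\Omega\subset\mathbb{C}^n$ be a bounded domain, let $\mathcal R$ and $\mathcal R'$ be quasi-free Hilbert modules over $A(\Omega)$ with generating sets $\{f_i\}_{i=1}^m$ and $\{g_i\}_{i=1}^m$, $1\le m<\infty$, and let $X:\mathcal R\to\mathcal R'$ be a module map. Then there exists $\Psi=(\psi_{ij})\in\mathrm{Hol}_m(\Omega)$ such that \[Xf_i=\sum_{j=1}^m\psi_{ij}g_j\quad\text{for }1\le i\le m.\]
   Context: $A(\Omega)$ is the closure, in the supremum norm on $\Omega$, of the set of functions holomorphic on some neighbourhood of $\overline\Omega$; $\ell^2_m$ is the $m$-dimensional Hilbert space and $\mathrm{Hol}_m(\Omega)$ is the space of holomorphic $\mathcal L(\ell^2_m)$-valued functions on $\Omega$ (holomorphic $m\times m$ matrix functions). A quasi-free Hilbert module of rank $m$ over $A(\Omega)$ is a Hilbert space $\mathcal R$ obtained as the completion of $A(\Omega)\otimes\ell^2_m$ (regarded as $\ell^2_m$-valued holomorphic functions on $\Omega$) with respect to an inner product such that: (1) for each $z\in\Omega$ evaluation at $z$ is bounded, with norm locally uniformly bounded in $z$; (2) $\|\varphi F\|_{\mathcal R}\le\|\varphi\|_{A(\Omega)}\|F\|_{\mathcal R}$; (3) if $(F_i)$ is Cauchy in $\mathcal R$-norm, then $F_i(z)\to0$ for all $z$ iff $\|F_i\|_{\mathcal R}\to0$. $A(\Omega)$ acts by multiplication. A generating set is $\{f_1,\dots,f_m\}\subset\mathcal R$ whose $A(\Omega)$-multiples span a dense subspace and whose localizations at each $z\in\Omega$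 form a basis of the localization $\mathcal R/\mathcal R_z$ ($\mathcal R_z$ the closure of $\{\varphi h:\varphi(z)=0\}$); then $\{f_i(z)\}$ is a basis of $\ell^2_m$ for each $z$. A module map is a bounded linear $X$ with $X(\varphi h)=\varphi X(h)$. In the identity $Xf_i=\sum_j\psi_{ij}g_j$ the right side means the function $z\mapsto\sum_j\psi_{ij}(z)g_j(z)$. *)

(* Defs.v *)
(* C^n is modelled as 'rV[Cx R]_n with Cx R = R[i] (the complex numbers over a
   real type R), equipped with MathComp-Analysis' normed/topological structure;
   holomorphy = complex (Frechet) differentiability, since MathComp-Analysis'
   [differentiable] over the scalar field Cx R requires a C-linear differential. *)
From HB Require Import structures.
From mathcomp Require Import all_boot all_order all_algebra.
From mathcomp Require Import complex.
From mathcomp Require Import all_classical all_reals all_analysis.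
Import Order.TTheory GRing.Theory Num.Theory.
Import numFieldNormedType.Exports numFieldTopology.Exports.

Set Implicit Arguments.
Unset Strict Implicit.
Unset Printing Implicit Defensive.

Local Open Scope classical_set_scope.
Local Open Scope ring_scope.

(* The complex numbers, seen as a numClosedFieldType (so that the analysis
   library's topology/norm instances apply). *)
Definition Cx (R : realType) : numClosedFieldType := R[i].

Section QuasiFree.
Variable R : realType.
Local Notation C := (Cx R).
Variable n : nat.
Local Notation Cn := ('rV[C]_n).

Definition bounded_domain (Om : set Cn) : Prop :=
  [/\ open Om, connected Om, Om !=set0 & bounded_set Om].

Definition holomorphic_on (W : normedModType C) (U : set Cn) (f : Cn -> W) : Prop :=
  forall z, U z -> differentiable f z.

(* A(Om): the sup-norm-on-Om closure of the functions holomorphic on some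
   open neighbourhood of the closure of Om (only values on Om matter). *)
Definition Aalg (Om : set Cn) : set (Cn -> C) := fun phi =>
  forall e : C, 0 < e -> exists V : set Cn,
    [/\ open V, closure Om `<=` V &
      exists g : Cn -> C, holomorphic_on V g /\
        (forall z, Om z -> `|phi z - g z| < e)].

Variable m : nat.
Local Notation Cm := ('rV[C]_m).
Local Notation fn := (Cn -> Cm).

Definition l2norm (v : Cm) : C := sqrtC (\sum_(k < m) v 0 k * (v 0 k)^*).

Definition hnorm (ip : fn -> fn -> C) (F : fn) : C := sqrtC (ip F F).

Definition fsub (F G : fn) : fn := fun z => F z - G z.
Definition fscale (phi : Cn -> C) (F : fn) : fn := fun z => phi z *: F z.
Definition lincomb (a : 'I_m -> C) (f : 'I_m -> fn) : fn :=
  fun z => \sum_(i < m) a i *: f i z.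

(* elements of the module are functions on C^n vanishing off Om
   (representation convention: a function on Om is extended by 0) *)
Definition supported_in (Om : set Cn) (F : fn) : Prop :=
  forall z, ~ Om z -> F z = 0.

(* A(Om) (x) l^2_m, as l^2_m-valued functions on Om *)
Definition Atensor (Om : set Cn) : set fn := fun F =>
  supported_in Om F /\ forall k : 'I_m, Aalg Om (fun z => F z 0 k).

Definition hcauchy (ip : fn -> fn -> C) (u : nat -> fn) : Prop :=
  forall e : C, 0 < e -> exists N, forall p q, (N <= p)%N -> (N <= q)%N ->
    hnorm ip (fsub (u p) (u q)) < e.

(* A quasi-free Hilbert module of rank m over A(Om): a Hilbert space M of
   l^2_m-valued holomorphic functions on Om with inner product ip, which is the
   completion of A(Om) (x) l^2_m and satisfies conditions (1)-(3). *)
Record quasi_free (Om : set Cn) (M : set fn) (ip : fn -> fn -> C) : Prop := {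
  qf_fun : forall F, M F -> supported_in Om F /\ holomorphic_on Om F;
  qf_zero : M (fun _ => 0);
  qf_lin : forall (a : C) F G, M F -> M G -> M (fun z => a *: F z + G z);
  qf_ip_lin : forall (a : C) F G H, M F -> M G -> M H ->
    ip (fun z => a *: F z + G z) H = a * ip F H + ip G H;
  qf_ip_herm : forall F G, M F -> M G -> ip G F = (ip F G)^*;
  qf_ip_pos : forall F, M F -> 0 <= ip F F;
  qf_ip_def : forall F, M F -> ip F F = 0 -> F = (fun _ => 0);
  qf_complete : forall u : nat -> fn, (forall k, M (u k)) -> hcauchy ip u ->
    exists F, M F /\ hnorm ip (fsub (u k) F) @[k --> \oo] --> (0 : C);
  qf_tensor_sub : Atensor Om `<=` M;
  qf_tensor_dense : forall F, M F -> forall e : C, 0 < e ->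
    exists G, Atensor Om G /\ hnorm ip (fsub F G) < e;
  (* (1) bounded evaluations, with locally uniformly bounded norms *)
  qf_eval : forall z, Om z -> exists c : C,
    \forall w \near z, forall F, M F -> l2norm (F w) <= c * hnorm ip F;
  (* (2) contractive module action of A(Om) (sup norm over Om) *)
  qf_action : forall phi F, Aalg Om phi -> M F ->
    M (fscale phi F) /\
    forall c : C, 0 <= c -> (forall z, Om z -> `|phi z| <= c) ->
      hnorm ip (fscale phi F) <= c * hnorm ip F;
  qf_cauchy : forall u : nat -> fn, (forall k, Atensor Om (u k)) -> hcauchy ip u ->
    ((forall z, Om z -> u k z @[k --> \oo] --> (0 : Cm)) <->
     hnorm ip (u k) @[k --> \oo] --> (0 : C))
}.

Definition Rz (Om : set Cn) (M : set fn) (ip : fn -> fn -> C) (z : Cn) : set fn :=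
  fun h => M h /\ forall e : C, 0 < e ->
    exists N (phi : 'I_N -> Cn -> C) (hs : 'I_N -> fn),
      (forall k, [/\ Aalg Om (phi k), phi k z = 0 & M (hs k)]) /\
      hnorm ip (fun w => h w - \sum_(k < N) phi k w *: hs k w) < e.

Definition generating_set (Om : set Cn) (M : set fn) (ip : fn -> fn -> C)
    (f : 'I_m -> fn) : Prop :=
  [/\ forall i, M (f i),
      (forall F, M F -> forall e : C, 0 < e ->
         exists phi : 'I_m -> Cn -> C, (forall i, Aalg Om (phi i)) /\
           hnorm ip (fun w => F w - \sum_(i < m) phi i w *: f i w) < e) &
      (* the localizations f_i + R_z form a basis of R / R_z *)
      forall z, Om z ->
        (forall a : 'I_m -> C, Rz Om M ip z (lincomb a f) -> forall i, a i = 0) /\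
        (forall h, M h -> exists a : 'I_m -> C, Rz Om M ip z (fsub h (lincomb a f)))].

Definition module_map (Om : set Cn) (M : set fn) (ip : fn -> fn -> C)
    (M' : set fn) (ip' : fn -> fn -> C) (X : fn -> fn) : Prop :=
  [/\ forall F, M F -> M' (X F),
      forall (a : C) F G, M F -> M G ->
        X (fun z => a *: F z + G z) = (fun z => a *: X F z + X G z),
      exists c : C, forall F, M F -> hnorm ip' (X F) <= c * hnorm ip F &
      forall phi F, Aalg Om phi -> M F -> X (fscale phi F) = fscale phi (X F)].

End QuasiFree.

(* Main.v *)
Require Import Defs.
From HB Require Import structures.
From mathcomp Require Import all_boot all_order all_algebra.
From mathcomp Require Import complex fingroup perm.
From mathcomp Require Import ring.
From mathcomp Require Import all_classical all_reals all_analysis.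
Import Order.TTheory GRing.Theory Num.Theory.
Import numFieldNormedType.Exports numFieldTopology.Exports.
Local Open Scope classical_set_scope.
Local Open Scope ring_scope.

Lemma Qlin (R : realType) (n m : nat) (Om : set 'rV[Cx R]_n)
  (M : set ('rV[Cx R]_n -> 'rV[Cx R]_m)) ip (hM : quasi_free Om M ip) a F G :
  M F -> M G ->
  ip (fun z => a *: F z + G z) (fun z => a *: F z + G z) =
  `|a| ^+ 2 * ip F F + a * ip F G + a^* * ip G F + ip G G.
Proof.
move=> MF MG.
have MS := qf_lin hM a MF MG.
rewrite (qf_ip_lin hM a MF MG MS).
rewrite (qf_ip_herm hM MS MF) (qf_ip_herm hM MS MG).
rewrite (qf_ip_lin hM a MF MG MF) (qf_ip_lin hM a MF MG MG).
rewrite !rmorphD !rmorphM /=.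
rewrite -(qf_ip_herm hM MF MF) -(qf_ip_herm hM MG MG).
rewrite -(qf_ip_herm hM MF MG) -(qf_ip_herm hM MG MF).
rewrite normCK; ring.
Qed.
Arguments Qlin {R n m Om M ip} hM a {F G}.

Lemma Qle (R : realType) (n m : nat) (Om : set 'rV[Cx R]_n)
  (M : set ('rV[Cx R]_n -> 'rV[Cx R]_m)) ip (hM : quasi_free Om M ip) a F G :
  M F -> M G ->
  ip (fun z => a *: F z + G z) (fun z => a *: F z + G z) <=
  2 * `|a| ^+ 2 * ip F F + 2 * ip G G.
Proof.
move=> MF MG.
have P := Qlin hM a MF MG.
have N := Qlin hM (- a) MF MG.
have N0 := qf_ip_pos hM (qf_lin hM (- a) MF MG).
rewrite normrN rmorphN /= in N.
have E : ip (fun z => a *: F z + G z) (fun z => a *: F z + G z) =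
   (2 * `|a| ^+ 2 * ip F F + 2 * ip G G) -
   ip (fun z => - a *: F z + G z) (fun z => - a *: F z + G z).
  by rewrite P N; ring.
by rewrite E lerBlDr lerDl.
Qed.
Arguments Qle {R n m Om M ip} hM a {F G}.

Lemma Msum (R : realType) (n m : nat) (Om : set 'rV[Cx R]_n)
  (M : set ('rV[Cx R]_n -> 'rV[Cx R]_m)) ip (hM : quasi_free Om M ip)
  (I : Type) (r : seq I) (c : I -> Cx R) (E : I -> 'rV[Cx R]_n -> 'rV[Cx R]_m) :
  (forall k, M (E k)) -> M (fun w => \sum_(k <- r) c k *: E k w).
Proof.
move=> ME; elim: r => [|a r IH].
  rewrite (_ : (fun w => _) = (fun _ => 0)); first exact: (qf_zero hM).
  by apply: funext => w; rewrite big_nil.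
rewrite (_ : (fun w => _) =
   (fun w => c a *: E a w + (fun w => \sum_(k <- r) c k *: E k w) w)).
  exact: (qf_lin hM).
by apply: funext => w; rewrite big_cons.
Qed.
Arguments Msum {R n m Om M ip} hM {I} r c {E}.

Lemma Qzero (R : realType) (n m : nat) (Om : set 'rV[Cx R]_n)
  (M : set ('rV[Cx R]_n -> 'rV[Cx R]_m)) ip (hM : quasi_free Om M ip) :
  ip (fun _ => 0) (fun _ => 0) = 0.
Proof.
have M0 := qf_zero hM.
have := qf_ip_lin hM 1 M0 M0 M0.
rewrite (_ : (fun z => _) = (fun _ => 0)); last first.
  by apply: funext => w; rewrite scale1r addr0.
rewrite mul1r; set x := ip _ _ => h.
have : x + x - x = x - x by rewrite -h.
by rewrite addrK subrr.

Qed.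
Arguments Qzero {R n m Om M ip} hM.

Lemma Qsum (R : realType) (n m : nat) (Om : set 'rV[Cx R]_n)
  (M : set ('rV[Cx R]_n -> 'rV[Cx R]_m)) ip (hM : quasi_free Om M ip)
  (I : Type) (r : seq I) (c : I -> Cx R) (E : I -> 'rV[Cx R]_n -> 'rV[Cx R]_m) d :
  (forall k, M (E k)) -> 0 <= d -> (forall k, `|c k| ^+ 2 <= d) ->
  ip (fun w => \sum_(k <- r) c k *: E k w) (fun w => \sum_(k <- r) c k *: E k w)
   <= 2 ^+ size r * d * \sum_(k <- r) ip (E k) (E k).
Proof.
move=> ME d0 hc; elim: r => [|a r IH].
  rewrite (_ : (fun w => _) = (fun _ => 0)); last first.
    by apply: funext => w; rewrite big_nil.
  by rewrite (Qzero hM) big_nil mulr0.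
rewrite (_ : (fun w => _) =
   (fun w => c a *: E a w + (fun w => \sum_(k <- r) c k *: E k w) w)); last first.
  by apply: funext => w; rewrite big_cons.
apply: le_trans (Qle hM (c a) (ME a) (Msum hM r c ME)) _.
have QE0 : 0 <= ip (E a) (E a) by exact: (qf_ip_pos hM).
have S0 : 0 <= \sum_(k <- r) ip (E k) (E k).
  by apply: sumr_ge0 => k _; exact: (qf_ip_pos hM).
have h2 : 1 <= 2 ^+ size r :> Cx R by apply: exprn_ege1; rewrite ler1n.
rewrite /= big_cons mulrDr [2 ^+ (size r).+1]exprS; apply: lerD.
  rewrite -!mulrA; apply: ler_wpM2l => //.
  rewrite mulrA -expr2; apply: (le_trans (ler_wpM2r QE0 (hc a))).
  by apply: ler_peMl => //; apply: mulr_ge0.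
rewrite -!mulrA; apply: ler_wpM2l => //.
by rewrite mulrA.
Qed.
Arguments Qsum {R n m Om M ip} hM {I} r c {E d}.

Lemma l2ge (R : realType) (m : nat) (v : 'rV[Cx R]_m) k : `|v 0 k| <= l2norm v.
Proof.
rewrite /l2norm -(sqrCK (normr_ge0 (v 0 k))) ler_sqrtC ?nnegrE ?exprn_ge0 //.
- rewrite normCK (bigD1 k) //= lerDl.
  by apply: sumr_ge0 => j _; exact: mul_conjC_ge0.
- by apply: sumr_ge0 => j _; exact: mul_conjC_ge0.
Qed.
Arguments l2ge {R m}.

Lemma vanish_Rz (R : realType) (n m : nat) (Om : set 'rV[Cx R]_n)
  (M : set ('rV[Cx R]_n -> 'rV[Cx R]_m)) ip (hM : quasi_free Om M ip) z h :
  Om z -> M h -> h z = 0 -> Rz Om M ip z h.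
Proof.
move=> Omz Mh hz0; split => // e e0.
pose E (k : 'I_m) := fun w : 'rV[Cx R]_n =>
  if `[< Om w >] then (delta_mx 0 k : 'rV[Cx R]_m) else 0.
have AE : forall k, Atensor Om (E k).
  move=> k; split.
    by move=> w nOw; rewrite /E asboolF.
  move=> l e' e'0; exists setT; split => //; first exact: openT.
  exists (fun _ => (delta_mx 0 k : 'rV[Cx R]_m) 0 l); split.
    by move=> w _; exact: differentiable_cst.
  by move=> w Ow; rewrite /E asboolT // subrr normr0.
have ME k : M (E k) := qf_tensor_sub hM (AE k).
have [c0 Hc0] := qf_eval hM Omz.
have Hev := nbhs_singleton Hc0.
pose K := \sum_(k < m) ip (E k) (E k).
have K0 : 0 <= K by apply: sumr_ge0 => k _; exact: (qf_ip_pos hM).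
pose P : Cx R := 2 ^+ size (index_enum 'I_m).
have P0 : 0 <= P by apply: exprn_ge0; rewrite ler0n.
pose L : Cx R := 2 + 2 * (P * `|c0| ^+ 2 * K).
have L2 : 2 <= L.
  rewrite /L lerDl; apply: mulr_ge0 => //; apply: mulr_ge0 => //.
  by apply: mulr_ge0 => //; apply: exprn_ge0.
have L0 : 0 < L by apply: lt_le_trans L2.
have L1 : 1 <= L by apply: le_trans L2; rewrite ler1n.
have [G [AG hG]] := qf_tensor_dense hM Mh (divr_gt0 e0 L0).
have MG := qf_tensor_sub hM AG.
have MhG : M (fsub h G).
  rewrite (_ : fsub h G = fun w => (-1) *: G w + h w); first exact: (qf_lin hM).
  by apply: funext => w; rewrite /fsub scaleN1r addrC.
set t := hnorm ip (fsub h G) in hG.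
have t0 : 0 <= t by rewrite /t /hnorm sqrtC_ge0; exact: (qf_ip_pos hM).
have Qt : ip (fsub h G) (fsub h G) = t ^+ 2 by rewrite /t /hnorm sqrtCK.
have hc : forall k, `|G z 0 k| ^+ 2 <= `|c0| ^+ 2 * t ^+ 2.
  move=> k.
  have H1 := Hev _ MhG.
  have H2 := l2ge (fsub h G z) k.
  have ct0 : 0 <= c0 * t.
    by apply: le_trans H1; apply: le_trans H2; exact: normr_ge0.
  rewrite -(ger0_norm ct0) normrM (ger0_norm t0) in H1.
  have H3 : `|G z 0 k| <= `|c0| * t.
    apply: le_trans H1; apply: le_trans H2.
    by rewrite /fsub hz0 sub0r mxE normrN.
  by rewrite -exprMn !expr2; apply: ler_pM => //; exact: normr_ge0.
exists m, (fun k w => G w 0 k - G z 0 k), E; split.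
  move=> k; split => //; last by rewrite subrr.
  move=> e' e'0; have [V [oV cV [g [hg Hg]]]] := AG.2 k e' e'0.
  exists V; split => //; exists (fun w => g w - G z 0 k); split.
    move=> w Vw.
    exact: (differentiableB (hg w Vw) (differentiable_cst (G z 0 k) w)).
  by move=> w Ow; rewrite opprB addrA subrK; exact: Hg.
have Heq : (fun w => h w - \sum_(k < m) (G w 0 k - G z 0 k) *: E k w) =
  (fun w => 1 *: fsub h G w + (fun w => \sum_(k < m) G z 0 k *: E k w) w).
  apply: funext => w; rewrite /E /fsub scale1r.
  case: (pselect (Om w)) => Ow.
  - rewrite asboolT //.
    rewrite (eq_bigr (fun k => G w 0 k *: (delta_mx 0 k : 'rV[Cx R]_m) -
                               G z 0 k *: delta_mx 0 k)); last first.
      by move=> k _; rewrite scalerBl.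
    by rewrite sumrB -row_sum_delta opprB addrA addrAC.
  - rewrite asboolF // !big1 => [|k _|k _]; rewrite ?scaler0 //.
    by rewrite ((qf_fun hM Mh).1 w Ow) (AG.1 w Ow) !subr0 addr0.
rewrite Heq /hnorm.
have MS := Msum hM (index_enum 'I_m) (fun k => G z 0 k) ME.
have Q1 := Qle hM 1 MhG MS.
have d0 : 0 <= `|c0| ^+ 2 * t ^+ 2 by apply: mulr_ge0; apply: exprn_ge0.
have Q2 := Qsum hM (index_enum 'I_m) (fun k => G z 0 k) ME d0 hc.
rewrite -(sqrCK (ltW e0)) ltr_sqrtC ?nnegrE; last 2 first.
- exact: (qf_ip_pos hM (qf_lin hM 1 MhG MS)).
- by apply: exprn_ge0; exact: ltW.
apply: le_lt_trans Q1 _; rewrite normr1 expr1n mulr1 Qt.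
apply: (@le_lt_trans _ _ (t ^+ 2 * L)).
  have -> : t ^+ 2 * L = 2 * t ^+ 2 + 2 * (P * (`|c0| ^+ 2 * t ^+ 2) * K).
    by rewrite /L; ring.
  by apply: lerD => //; apply: ler_wpM2l => //.
have tL : t * L < e by rewrite -ltr_pdivlMr.
apply: (@le_lt_trans _ _ ((t * L) ^+ 2)).
  rewrite exprMn; apply: ler_wpM2l; first exact: exprn_ge0.
  by rewrite expr2; apply: ler_peMl => //; exact: ltW.
rewrite ltrXn2r //; apply: mulr_ge0 => //; exact: ltW.
Qed.
Arguments vanish_Rz {R n m Om M ip} hM {z h}.
Lemma dsum (K : numFieldType) (V W : normedModType K) (I : Type) (r : seq I)
  (P : pred I) (F : I -> V -> W) x :
  (forall i, differentiable (F i) x) ->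
  differentiable (fun w => \sum_(i <- r | P i) F i w) x.
Proof.
move=> HF; elim: r => [|a r IH].
  under eq_fun do rewrite big_nil; exact: differentiable_cst.
under eq_fun do rewrite big_cons; case: (P a) => //.
exact: (@differentiableD _ _ _ (F a) (fun w => \sum_(i <- r | P i) F i w)).
Qed.

Lemma dprod (K : numFieldType) (V : normedModType K) (I : Type) (r : seq I)
  (P : pred I) (F : I -> V -> K) x :
  (forall i, differentiable (F i) x) ->
  differentiable (fun w => \prod_(i <- r | P i) F i w) x.
Proof.
move=> HF; elim: r => [|a r IH].
  under eq_fun do rewrite big_nil; exact: differentiable_cst.
under eq_fun do rewrite big_cons; case: (P a) => //.
exact: (@differentiableM _ _ (F a) (fun w => \prod_(i <- r | P i) F i w)).
Qed.

Lemma ddet (K : numFieldType) (V : normedModType K) k (B : V -> 'M[K]_k) x :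
  (forall i j, differentiable (fun w => B w i j) x) ->
  differentiable (fun w => \det (B w)) x.
Proof.
move=> HB; rewrite /determinant; apply: dsum => s.
have h1 : differentiable (fun _ : V => (-1) ^+ s : K) x by exact: differentiable_cst.
have h2 : differentiable (fun w => \prod_i B w i (s i)) x by apply: dprod.
exact: (differentiableM h1 h2).
Qed.

Lemma dentry (K : numFieldType) (V : normedModType K) p q (A : V -> 'M[K]_(p,q)) x i j :
  differentiable A x -> differentiable (fun w => A w i j) x.
Proof.
move=> dA; exact: (differentiable_comp dA (differentiable_coord _ i j)).
Qed.

Lemma dmatrix (K : numFieldType) (V : normedModType K) p q
  (E : 'I_p -> 'I_q -> V -> K) x :
  (forall i j, differentiable (E i j) x) ->
  differentiable (fun w => \matrix_(i, j) E i j w) x.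
Proof.
move=> HE.
have -> : (fun w => \matrix_(i, j) E i j w) =
   (fun w => \sum_i \sum_j E i j w *: (delta_mx i j : 'M[K]_(p,q))).
  apply: funext => w; rewrite {1}[LHS]matrix_sum_delta.
  by apply: eq_bigr => i _; apply: eq_bigr => j _; rewrite mxE.
apply: dsum => i; apply: dsum => j; exact: differentiableZl.
Qed.

Lemma dmul (K : numFieldType) (V : normedModType K) (f g : V -> K) x :
  differentiable f x -> differentiable g x ->
  differentiable (fun w => f w * g w) x.
Proof. by move=> df dg; exact: (differentiableM df dg). Qed.

Theorem lemma5 (R : realType) (n m : nat) (hn : (0 < n)%N) (hm : (0 < m)%N)
  (Om : set 'rV[Cx R]_n) (hOm : bounded_domain Om)
  (M : set ('rV[Cx R]_n -> 'rV[Cx R]_m)) (ip : ('rV[Cx R]_n -> 'rV[Cx R]_m) ->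
     ('rV[Cx R]_n -> 'rV[Cx R]_m) -> Cx R)
  (M' : set ('rV[Cx R]_n -> 'rV[Cx R]_m)) (ip' : ('rV[Cx R]_n -> 'rV[Cx R]_m) ->
     ('rV[Cx R]_n -> 'rV[Cx R]_m) -> Cx R)
  (hM : quasi_free Om M ip) (hM' : quasi_free Om M' ip')
  (f g : 'I_m -> 'rV[Cx R]_n -> 'rV[Cx R]_m)
  (hf : generating_set Om M ip f) (hg : generating_set Om M' ip' g)
  (X : ('rV[Cx R]_n -> 'rV[Cx R]_m) -> ('rV[Cx R]_n -> 'rV[Cx R]_m))
  (hX : module_map Om M ip M' ip' X) :
  exists Psi : 'rV[Cx R]_n -> 'M[Cx R]_m,
    holomorphic_on Om Psi /\
    forall (i : 'I_m) (z : 'rV[Cx R]_n), Om z ->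
      X (f i) z = \sum_(j < m) Psi z i j *: g j z.
Proof.
case: hX => XM _ _ _.
case: hf => Mf _ _.
case: hg => Mg _ hgz.
pose Gm w : 'M[Cx R]_m := \matrix_(j, k) g j w 0 k.
pose Fm w : 'M[Cx R]_m := \matrix_(i, k) X (f i) w 0 k.
pose Psi w := (\det (Gm w))^-1 *: (Fm w *m \adj (Gm w)).
have dz : forall z, Om z -> \det (Gm z) != 0.
  move=> z Oz; apply/negP => /det0P [v vn0 vG].
  pose a := fun j => v 0 j.
  have Ma : M' (lincomb a g) by rewrite /lincomb; exact: (Msum hM' _ a Mg).
  have la0 : lincomb a g z = 0.
    apply/rowP => k; rewrite /lincomb summxE.
    have -> : (0 : 'rV[Cx R]_m) 0 k = (v *m Gm z) 0 k by rewrite vG.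
    rewrite [RHS]mxE.
    by apply: eq_bigr => j _; rewrite !mxE.
  have a0 := (hgz z Oz).1 a (vanish_Rz hM' Oz Ma la0).
  by move/eqP: vn0; apply; apply/rowP => j; rewrite mxE; exact: a0.
exists Psi; split.
  move=> z Oz.
  have dg : forall j, differentiable (g j) z := fun j => (qf_fun hM' (Mg j)).2 z Oz.
  have dF : forall i, differentiable (X (f i)) z :=
    fun i => (qf_fun hM' (XM _ (Mf i))).2 z Oz.
  have dG : forall a b, differentiable (fun w => Gm w a b) z.
    move=> a b; rewrite (_ : (fun w => _) = (fun w => g a w 0 b)).
      exact: dentry.
    by apply: funext => w; rewrite mxE.
  rewrite (_ : Psi = fun w => \matrix_(i, j) Psi w i j); last first.
    by apply: funext => w; apply/matrixP => i j; rewrite mxE.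
  apply: dmatrix => i j.
  rewrite (_ : (fun w => Psi w i j) = (fun w => (\det (Gm w))^-1 *
     \sum_k Fm w i k * ((-1) ^+ (j + k) * \det (row' j (col' k (Gm w)))))).
    apply: dmul.
      by apply: differentiableV; [exact: ddet | exact: dz].
    apply: dsum => k; apply: dmul.
      rewrite (_ : (fun w => _) = (fun w => X (f i) w 0 k)).
        exact: dentry.
      by apply: funext => w; rewrite mxE.
    apply: dmul; first exact: differentiable_cst.
    apply: ddet => a b.
    rewrite (_ : (fun w => _) = (fun w => Gm w (lift j a) (lift k b))).
      exact: dG.
    by apply: funext => w; rewrite !mxE.
  apply: funext => w; rewrite /Psi !mxE; congr (_ * _).
  by apply: eq_bigr => k _; rewrite !mxE.
move=> i z Oz.
have PG : Psi z *m Gm z = Fm z.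
  by rewrite /Psi -scalemxAl -mulmxA mul_adj_mx mul_mx_scalar scalerA mulVf ?scale1r //; exact: dz.
apply/rowP => k; rewrite summxE.
have -> : X (f i) z 0 k = Fm z i k by rewrite mxE.
rewrite -PG mxE; apply: eq_bigr => j _.
by rewrite [in RHS]mxE [Gm z j k]mxE.
Qed.
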